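(* Let $q\ge2$ and let $f\colon\mathbb{N}_0\to\mathbb{U}$ be a $q$-multiplicative sequence such that for every $\alpha\in\mathbb{R}$, $$\frac1N\sum_{n=0}^{N-1}f(n)e(n\alpha)\to0\quad\text{as }N\to\infty.$$ Then the convergence is uniform in $\alpha$: $$\sup_{\alpha\in\mathbb{R}}\Big|\frac1N\sum_{n=0}^{N-1}f(n)e(n\alpha)\Big|\to0\quad\text{as }N\to\infty.$$
   Context: $\mathbb{N}_0=\{0,1,2,\dots\}$, $\mathbb{U}=\{z\in\mathbb{C}:|z|=1\}$, $e(t)=e^{2\pi i t}$. A sequence $f\colon\mathbb{N}_0\to\mathbb{U}$ is $q$-multiplicative if for all integers $t,m,n\ge 0$ with $m<q^t$ and $q^t\mid n$ one has $f(m+n)=f(m)f(n)$. *)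

(* Defs.v *)
From Stdlib Require Import Reals.
From Coquelicot Require Import Coquelicot.
Open Scope R_scope.

Definition e (t : R) : C := (cos (2 * PI * t), sin (2 * PI * t)).

Definition q_multiplicative (q : nat) (f : nat -> C) : Prop :=
  forall t m n : nat, (m < q ^ t)%nat -> Nat.divide (q ^ t) n ->
    f (m + n)%nat = Cmult (f m) (f n).

Fixpoint csum (g : nat -> C) (N : nat) : C :=
  match N with
  | O => RtoC 0
  | S N' => Cplus (csum g N') (g N')
  end.

Definition avg (f : nat -> C) (N : nat) (alpha : R) : C :=
  Cmult (RtoC (/ INR N)) (csum (fun n => Cmult (f n) (e (INR n * alpha))) N).

(* Main.v *)
Require Import Defs.
From Stdlib Require Import Reals Lra Lia ZArith ClassicalEpsilon Classical.
From Coquelicot Require Import Coquelicot.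
Open Scope R_scope.

Lemma csum_ext g h N : (forall n, (n < N)%nat -> g n = h n) -> csum g N = csum h N.
Proof.
  induction N; intros H; simpl; auto.
  rewrite IHN by (intros; apply H; lia). rewrite H by lia. reflexivity.
Qed.

Lemma csum_add g A B : csum g (A + B) = Cplus (csum g A) (csum (fun m => g (A + m)%nat) B).
Proof.
  induction B; simpl.
  - rewrite Nat.add_0_r. ring.
  - rewrite Nat.add_succ_r. simpl. rewrite IHB. ring.
Qed.

Lemma csum_scal c g B : csum (fun m => Cmult c (g m)) B = Cmult c (csum g B).
Proof. induction B; simpl. ring. rewrite IHB. ring. Qed.

Lemma csum_bound g N c : (forall n, (n < N)%nat -> Cmod (g n) <= c) -> Cmod (csum g N) <= INR N * c.
Proof.
  induction N; intros H; cbn [csum].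
  - rewrite Cmod_0. simpl; lra.
  - rewrite S_INR. eapply Rle_trans. apply Cmod_triangle.
    assert (Cmod (csum g N) <= INR N * c) by (apply IHN; intros; apply H; lia).
    assert (Cmod (g N) <= c) by (apply H; lia). lra.
Qed.

Lemma csum_diff g h N c : (forall n, (n < N)%nat -> Cmod (Cminus (g n) (h n)) <= c) ->
  Cmod (Cminus (csum g N) (csum h N)) <= INR N * c.
Proof.
  induction N; intros H; cbn [csum].
  - replace (Cminus (RtoC 0) (RtoC 0)) with (RtoC 0) by ring. rewrite Cmod_0. simpl; lra.
  - rewrite S_INR. 
    replace (Cminus (Cplus (csum g N) (g N)) (Cplus (csum h N) (h N))) with
      (Cplus (Cminus (csum g N) (csum h N)) (Cminus (g N) (h N))) by ring.
    eapply Rle_trans. apply Cmod_triangle.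
    assert (Cmod (Cminus (csum g N) (csum h N)) <= INR N * c) by (apply IHN; intros; apply H; lia).
    assert (Cmod (Cminus (g N) (h N)) <= c) by (apply H; lia). lra.
Qed.

Lemma e_add x y : e (x + y) = Cmult (e x) (e y).
Proof.
  unfold e, Cmult; simpl.
  replace (2 * PI * (x + y)) with (2 * PI * x + 2 * PI * y) by ring.
  rewrite cos_plus, sin_plus. f_equal; ring.
Qed.

Lemma Cmod_e x : Cmod (e x) = 1.
Proof.
  unfold e, Cmod; cbn [fst snd].
  replace (cos (2 * PI * x) ^ 2 + sin (2 * PI * x) ^ 2) with 1.
  apply sqrt_1. pose proof (sin2_cos2 (2*PI*x)). unfold Rsqr in H. nra.
Qed.

Lemma e_nat x k : e (x + INR k) = e x.
Proof.
  unfold e. replace (2 * PI * (x + INR k)) with (2 * PI * x + 2 * INR k * PI) by ring.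
  rewrite cos_period, sin_period. reflexivity.
Qed.

Lemma Rabs_sin_le x : Rabs (sin x) <= Rabs x.
Proof.
  pose proof (SIN_bound x). pose proof PI_RGT_0. pose proof PI_4.
  assert (Hpi : 2 < PI) by (pose proof PI2_1; lra).
  destruct (Rle_lt_dec 1 (Rabs x)).
  { apply Rle_trans with 1; auto. apply Rabs_le; lra. }
  apply Rabs_def2 in r as [Hx1 Hx2].
  destruct (Rtotal_order x 0) as [Hn|[Hn|Hn]].
  - pose proof (sin_gt_x x Hn). assert (sin x <= 0).
    { rewrite <- (Ropp_involutive x), sin_neg.
      pose proof (sin_ge_0 (-x) ltac:(lra) ltac:(lra)). lra. }
    rewrite !Rabs_left1; lra.
  - subst. rewrite sin_0. lra.
  - pose proof (sin_lt_x x Hn). pose proof (sin_ge_0 x ltac:(lra) ltac:(lra)).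
    rewrite !Rabs_right; lra.
Qed.

Lemma Cmod_le_sum z : Cmod z <= 2 * (Rabs (fst z) + Rabs (snd z)).
Proof.
  eapply Rle_trans. apply Cmod_2Rmax.
  assert (sqrt 2 <= 2).
  { assert (H4: sqrt (2*2) = 2) by (apply sqrt_square; lra).
    assert (sqrt 2 <= sqrt (2*2)) by (apply sqrt_le_1_alt; lra). lra. }
  assert (0 <= Rmax (Rabs (fst z)) (Rabs (snd z)) <= Rabs (fst z) + Rabs (snd z)).
  { split. eapply Rle_trans. apply Rabs_pos. apply Rmax_l.
    apply Rmax_lub; pose proof (Rabs_pos (fst z)); pose proof (Rabs_pos (snd z)); lra. }
  assert (0 <= sqrt 2) by apply sqrt_pos.
  apply Rle_trans with (2 * Rmax (Rabs (fst z)) (Rabs (snd z))).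
  apply Rmult_le_compat_r; lra. lra.
Qed.

Lemma e_lip x y : Cmod (Cminus (e x) (e y)) <= 8 * PI * Rabs (x - y).
Proof.
  eapply Rle_trans. apply Cmod_le_sum. unfold e; simpl.
  rewrite <- Rminus_def.  rewrite <- Rminus_def.
  rewrite form2, form4.
  set (p := 2 * PI * x); set (r := 2 * PI * y).
  assert (Hd : Rabs ((p - r) / 2) = PI * Rabs (x - y)).
  { unfold p, r. replace ((2 * PI * x - 2 * PI * y) / 2) with (PI * (x - y)) by field.
    rewrite Rabs_mult, Rabs_right; auto. pose proof PI_RGT_0; lra. }
  pose proof (Rabs_sin_le ((p - r) / 2)).
  pose proof (SIN_bound ((p + r) / 2)). pose proof (COS_bound ((p + r) / 2)).
  rewrite !Rabs_mult.
  assert (Rabs (sin ((p + r) / 2)) <= 1) by (apply Rabs_le; lra).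
  assert (Rabs (cos ((p + r) / 2)) <= 1) by (apply Rabs_le; lra).
  replace (Rabs (-2)) with 2 by (rewrite Rabs_left; lra).
  rewrite (Rabs_right 2) by lra.
  pose proof (Rabs_pos (sin ((p - r) / 2))).
  pose proof (Rabs_pos (sin ((p + r) / 2))).
  pose proof (Rabs_pos (cos ((p + r) / 2))).
  assert (Rabs (sin ((p - r) / 2)) * Rabs (sin ((p + r) / 2)) <= PI * Rabs (x - y)).
  { rewrite <- Hd. rewrite <- (Rmult_1_r (Rabs ((p - r) / 2))). apply Rmult_le_compat; lra. }
  assert (Rabs (cos ((p + r) / 2)) * Rabs (sin ((p - r) / 2)) <= PI * Rabs (x - y)).
  { rewrite <- Hd. rewrite <- (Rmult_1_l (Rabs ((p - r) / 2))). apply Rmult_le_compat; lra. }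
  nra.
Qed.
Definition S_ (f : nat -> C) N a := csum (fun n => Cmult (f n) (e (INR n * a))) N.

Lemma Cmod_term f n a : (forall n, Cmod (f n) = 1) -> Cmod (Cmult (f n) (e (INR n * a))) = 1.
Proof. intros hf. rewrite Cmod_mult, hf, Cmod_e. ring. Qed.

Lemma S_block q f k Q a : (forall n, Cmod (f n) = 1) -> q_multiplicative q f ->
  Cmod (S_ f (Q * q ^ k) a) <= INR Q * Cmod (S_ f (q ^ k) a).
Proof.
  intros hf hm. induction Q.
  - simpl. unfold S_; simpl. rewrite Cmod_0. lra.
  - unfold S_ in *. rewrite Nat.mul_succ_l, csum_add, S_INR.
    set (c := Cmult (f (Q * q ^ k)%nat) (e (INR (Q * q ^ k) * a))).
    rewrite (csum_ext (fun m => Cmult (f (Q * q ^ k + m)%nat) (e (INR (Q * q ^ k + m) * a))) (fun m => Cmult c (Cmult (f m) (e (INR m * a)))) (q ^ k)).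
    + rewrite csum_scal. eapply Rle_trans. apply Cmod_triangle.
      rewrite Cmod_mult. unfold c. rewrite Cmod_term by auto. lra.
    + intros m Hm. unfold c. rewrite Nat.add_comm.
      rewrite (hm k m (Q * q ^ k)%nat Hm) by (exists Q; reflexivity).
      rewrite plus_INR, Rmult_plus_distr_r, e_add. ring.
Qed.

Lemma S_lip f N a b : (forall n, Cmod (f n) = 1) ->
  Rabs (Cmod (S_ f N a) - Cmod (S_ f N b)) <= INR N * (8 * PI * INR N * Rabs (a - b)).
Proof.
  intros hf.
  assert (H : Cmod (Cminus (S_ f N a) (S_ f N b)) <= INR N * (8 * PI * INR N * Rabs (a - b))).
  { apply csum_diff. intros n Hn.
    replace (Cminus (Cmult (f n) (e (INR n * a))) (Cmult (f n) (e (INR n * b))))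
      with (Cmult (f n) (Cminus (e (INR n * a)) (e (INR n * b)))) by ring.
    rewrite Cmod_mult, hf, Rmult_1_l. eapply Rle_trans. apply e_lip.
    replace (INR n * a - INR n * b) with (INR n * (a - b)) by ring.
    rewrite Rabs_mult, (Rabs_right (INR n)) by (apply Rle_ge, pos_INR).
    pose proof PI_RGT_0. pose proof (Rabs_pos (a - b)).
    assert (INR n <= INR N) by (apply le_INR; lia).
    assert (0 <= 8 * PI * Rabs (a - b)) by (apply Rmult_le_pos; lra). nra. }
  apply Rabs_le. split.
  - assert (Cmod (S_ f N b) <= Cmod (S_ f N a) + Cmod (Cminus (S_ f N a) (S_ f N b))).
    { replace (S_ f N b) with (Cminus (S_ f N a) (Cminus (S_ f N a) (S_ f N b))) at 1 by ring.
      unfold Cminus at 1. eapply Rle_trans. apply Cmod_triangle. rewrite Cmod_opp. lra. }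
    lra.
  - assert (Cmod (S_ f N a) <= Cmod (Cminus (S_ f N a) (S_ f N b)) + Cmod (S_ f N b)).
    { replace (S_ f N a) with (Cplus (Cminus (S_ f N a) (S_ f N b)) (S_ f N b)) at 1 by ring.
      apply Cmod_triangle. }
    lra.
Qed.

Lemma IZR_nat z : exists k, IZR z = INR k \/ IZR z = - INR k.
Proof.
  destruct (Z_le_gt_dec 0 z).
  - exists (Z.to_nat z). left. rewrite INR_IZR_INZ, Z2Nat.id; auto.
  - exists (Z.to_nat (- z)). right. rewrite INR_IZR_INZ, Z2Nat.id by lia.
    rewrite opp_IZR. ring.
Qed.

Lemma S_period f N a z : S_ f N (a - IZR z) = S_ f N a.
Proof.
  unfold S_. apply csum_ext. intros n _. f_equal.
  destruct (IZR_nat z) as [k [Hk|Hk]]; rewrite Hk.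
  - rewrite <- (e_nat (INR n * (a - INR k)) (n * k)). f_equal. rewrite mult_INR; ring.
  - replace (INR n * (a - - INR k)) with (INR n * a + INR (n * k)) by (rewrite mult_INR; ring).
    apply e_nat.
Qed.

Lemma avg_S f N a : (0 < N)%nat -> Cmod (avg f N a) = Cmod (S_ f N a) / INR N.
Proof.
  intros HN. unfold avg, S_. rewrite Cmod_mult, Cmod_R, Rabs_right.
  unfold Rdiv; ring. apply Rle_ge, Rlt_le, Rinv_0_lt_compat, lt_0_INR; auto.
Qed.

Lemma lub_bound (h : R -> R) B : (forall a, 0 <= h a <= B) ->
  0 <= real (Lub_Rbar (fun x => exists a : R, x = h a)) <= B.
Proof.
  intros H. destruct (Lub_Rbar_correct (fun x => exists a : R, x = h a)) as [Hub Hl].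
  assert (Hb : is_ub_Rbar (fun x => exists a : R, x = h a) B).
  { intros x [a ->]. simpl. apply H. }
  specialize (Hl B Hb). specialize (Hub (h 0) (ex_intro _ 0 eq_refl)).
  pose proof (H 0).
  destruct (Lub_Rbar (fun x => exists a : R, x = h a)); simpl in *; try contradiction; lra.
Qed.

Lemma qpow_pos q k : (2 <= q)%nat -> 0 < INR (q ^ k).
Proof. intros. apply lt_0_INR. apply Nat.neq_0_lt_0, Nat.pow_nonzero. lia. Qed.

Lemma key (q : nat) (f : nat -> C) :
  (2 <= q)%nat ->
  (forall n, Cmod (f n) = 1) ->
  q_multiplicative q f ->
  (forall alpha : R, is_lim_seq (fun N => Cmod (avg f N alpha)) 0) ->
  forall eps, 0 < eps -> exists K, forall a, Cmod (S_ f (q ^ K) a) <= eps * INR (q ^ K).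
Proof.
  intros hq hf hm hlim eps Heps. apply NNPP; intro Hn.
  assert (Hex : forall K, exists a, 0 <= a <= 1 /\ eps * INR (q ^ K) < Cmod (S_ f (q ^ K) a)).
  { intro K. apply NNPP; intro H2. apply Hn. exists K. intro a. apply Rnot_lt_le. intro H3.
    apply H2. exists (frac_part a). split.
    - pose proof (base_fp a). lra.
    - unfold frac_part. rewrite S_period. auto. }
  set (sq := fun K => proj1_sig (constructive_indefinite_description _ (Hex K))).
  assert (Hsq : forall K, 0 <= sq K <= 1 /\ eps * INR (q ^ K) < Cmod (S_ f (q ^ K) (sq K))).
  { intro K. exact (proj2_sig (constructive_indefinite_description _ (Hex K))). }
  destruct (Bolzano_Weierstrass sq (fun c => 0 <= c <= 1) (compact_P3 0 1)) as [l Hl].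
  { intro n. apply Hsq. }
  assert (Hlow : forall j, eps / 2 * INR (q ^ j) <= Cmod (S_ f (q ^ j) l)).
  { intro j. pose proof (qpow_pos q j hq) as HB. pose proof PI_RGT_0.
    assert (Hd : 0 < eps / (16 * PI * INR (q ^ j))).
    { apply Rdiv_lt_0_compat; auto. apply Rmult_lt_0_compat; lra. }
    destruct (Hl (disc l (mkposreal _ Hd)) j) as [p [Hp Hv]].
    { exists (mkposreal _ Hd). intros x hx; auto. }
    unfold disc in Hv; simpl in Hv.
    destruct (Hsq p) as [_ Hsp].
    assert (Hpq : (q ^ p = q ^ (p - j) * q ^ j)%nat).
    { rewrite <- Nat.pow_add_r. f_equal. lia. }
    rewrite Hpq in Hsp. pose proof (S_block q f j (q ^ (p - j)) (sq p) hf hm) as Hb.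
    rewrite mult_INR in Hsp. pose proof (qpow_pos q (p - j) hq) as HA.
    assert (H1 : eps * INR (q ^ j) < Cmod (S_ f (q ^ j) (sq p))).
    { apply (Rmult_lt_reg_l (INR (q ^ (p - j)))); auto. lra. }
    pose proof (S_lip f (q ^ j) (sq p) l hf) as Hlip.
    assert (H2 : 8 * PI * INR (q ^ j) * Rabs (sq p - l) <= eps / 2).
    { apply Rle_trans with (8 * PI * INR (q ^ j) * (eps / (16 * PI * INR (q ^ j)))).
      - apply Rmult_le_compat_l. apply Rmult_le_pos; lra. lra.
      - right. field. lra. }
    assert (H3 : INR (q ^ j) * (8 * PI * INR (q ^ j) * Rabs (sq p - l)) <= INR (q ^ j) * (eps / 2)).
    { apply Rmult_le_compat_l; lra. }
    apply Rabs_le_between in Hlip. lra. }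
  specialize (hlim l). apply is_lim_seq_spec in hlim.
  destruct (hlim (mkposreal (eps / 2) ltac:(lra))) as [N0 HN0].
  assert (HqN : (N0 <= q ^ N0)%nat) by (apply Nat.lt_le_incl, Nat.pow_gt_lin_r; lia).
  specialize (HN0 _ HqN). simpl in HN0.
  rewrite avg_S in HN0 by (apply INR_lt; simpl; apply qpow_pos; auto).
  rewrite Rminus_0_r in HN0.
  pose proof (qpow_pos q N0 hq). specialize (Hlow N0).
  assert (eps / 2 <= Cmod (S_ f (q ^ N0) l) / INR (q ^ N0)).
  { apply (Rmult_le_reg_r (INR (q ^ N0))); auto.
    replace (Cmod (S_ f (q ^ N0) l) / INR (q ^ N0) * INR (q ^ N0)) with (Cmod (S_ f (q ^ N0) l)) by (field; lra). lra. }
  rewrite Rabs_right in HN0. lra.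
  apply Rle_ge. unfold Rdiv. apply Rmult_le_pos. apply Cmod_ge_0. left. apply Rinv_0_lt_compat. auto.
Qed.

Theorem lemma2p3 (q : nat) (f : nat -> C) :
  (2 <= q)%nat ->
  (forall n, Cmod (f n) = 1) ->
  q_multiplicative q f ->
  (forall alpha : R, is_lim_seq (fun N => Cmod (avg f N alpha)) 0) ->
  is_lim_seq
    (fun N => real (Lub_Rbar (fun x => exists alpha : R, x = Cmod (avg f N alpha))))
    0.
Proof.
  intros hq hf hm hlim. apply is_lim_seq_spec. intros eps.
  pose proof (cond_pos eps) as Heps.
  destruct (key q f hq hf hm hlim (eps / 4) ltac:(lra)) as [K HK].
  set (M := (q ^ K)%nat) in *.
  assert (HM : 0 < INR M) by (apply qpow_pos; auto).
  assert (HMn : M <> 0%nat) by (intro HH; rewrite HH in HM; simpl in HM; lra).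
  destruct (archimed_cor1 (eps / (4 * INR M))) as [N0 [HN0 HN0pos]].
  { apply Rdiv_lt_0_compat; lra. }
  assert (HN0r : 0 < INR N0) by (apply lt_0_INR; auto).
  assert (HMN0 : INR M < eps / 4 * INR N0).
  { assert (H1 : INR M * INR N0 * / INR N0 < INR M * INR N0 * (eps / (4 * INR M))).
    { apply Rmult_lt_compat_l; [nra | exact HN0]. }
    replace (INR M * INR N0 * / INR N0) with (INR M) in H1 by (field; lra).
    replace (INR M * INR N0 * (eps / (4 * INR M))) with (eps / 4 * INR N0) in H1 by (field; lra).
    exact H1. }
  exists N0. intros N HN.
  assert (HNr : INR N0 <= INR N) by (apply le_INR; auto).
  assert (Hb : forall a, 0 <= Cmod (avg f N a) <= eps / 2).
  { intro a. split. apply Cmod_ge_0. rewrite avg_S by lia.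
    set (Q := (N / M)%nat). set (r := (N mod M)%nat).
    assert (HNd : N = (Q * M + r)%nat) by (pose proof (Nat.div_mod N M HMn) as HH; rewrite Nat.mul_comm in HH; exact HH).
    assert (Hr : (r < M)%nat) by (apply Nat.mod_upper_bound; auto).
    assert (HX : Cmod (S_ f N a) <= eps / 4 * INR N + INR M).
    { rewrite HNd at 1. unfold S_. rewrite csum_add. eapply Rle_trans. apply Cmod_triangle.
      pose proof (S_block q f K Q a hf hm) as H1. unfold S_ in H1. fold M in H1.
      pose proof (HK a) as H2. unfold S_ in H2. fold M in H2.
      assert (H3 : Cmod (csum (fun m => Cmult (f (Q * M + m)%nat) (e (INR (Q * M + m) * a))) r) <= INR r * 1).
      { apply csum_bound. intros n _. rewrite Cmod_term; auto. lra. }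
      assert (INR r <= INR M) by (apply le_INR; lia).
      assert (INR Q * INR M <= INR N) by (rewrite <- mult_INR; apply le_INR; lia).
      assert (INR Q * Cmod (csum (fun n => Cmult (f n) (e (INR n * a))) M) <= INR Q * (eps / 4 * INR M)).
      { apply Rmult_le_compat_l; auto. apply pos_INR. }
      nra. }
    apply (Rmult_le_reg_r (INR N)); [lra|].
    replace (Cmod (S_ f N a) / INR N * INR N) with (Cmod (S_ f N a)) by (field; lra).
    assert (eps / 4 * INR N0 <= eps / 4 * INR N) by (apply Rmult_le_compat_l; lra). lra. }
  pose proof (lub_bound (fun a => Cmod (avg f N a)) (eps / 2) Hb) as HL. cbv beta in HL.
  rewrite Rminus_0_r, Rabs_right by lra. lra.
Qed.
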